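(* Let $I(\emptyset)$ denote the quiver with no vertices and no edges, and let $C$ be a quiver. A quiver homomorphism $\varphi : I(\emptyset) \to C$ is mono-essential if and only if $|V(C)|\le 1$ and $|E(C)|\le 1$.
   Context: A quiver is a quadruple $(V,E,\sigma,\tau)$ with $V,E$ sets and $\sigma,\tau : E \to V$ functions. A quiver homomorphism $G \to H$ is a pair $(\phi_V,\phi_E)$ of functions on vertices and edges commuting with sources and targets; composition is componentwise. A quiver homomorphism is a monomorphism (monic) in the category $\mathbf{Quiv}$ if and only if both its vertex and edge maps are injective. A monic homomorphism $\varphi : A \to B$ is mono-essential if for every quiver $C'$ and homomorphism $\alpha : B \to C'$, if $\alpha\circ\varphi$ is monic then $\alpha$ is monic. *)

(* Defs.v *)
Record quiver : Type := Quiver {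
  qV : Type;
  qE : Type;
  qsrc : qE -> qV;
  qtgt : qE -> qV
}.

Record qhom (G H : quiver) : Type := QHom {
  hV : qV G -> qV H;
  hE : qE G -> qE H;
  hsrc : forall e, hV (qsrc G e) = qsrc H (hE e);
  htgt : forall e, hV (qtgt G e) = qtgt H (hE e)
}.
Arguments hV {G H} _ _.
Arguments hE {G H} _ _.

Definition qcomp {A B C : quiver} (g : qhom B C) (f : qhom A B) : qhom A C.
Proof.
  refine (QHom A C (fun v => hV g (hV f v)) (fun e => hE g (hE f e)) _ _).
  - intro e; rewrite (hsrc _ _ f), (hsrc _ _ g); reflexivity.
  - intro e; rewrite (htgt _ _ f), (htgt _ _ g); reflexivity.
Defined.

Definition qhom_eq {A B : quiver} (f g : qhom A B) : Prop :=
  (forall v, hV f v = hV g v) /\ (forall e, hE f e = hE g e).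

Definition monic {A B : quiver} (f : qhom A B) : Prop :=
  forall (Z : quiver) (g h : qhom Z A),
    qhom_eq (qcomp f g) (qcomp f h) -> qhom_eq g h.

Definition mono_essential {A B : quiver} (phi : qhom A B) : Prop :=
  monic phi /\
  forall (C' : quiver) (alpha : qhom B C'), monic (qcomp alpha phi) -> monic alpha.

Definition I_empty : quiver :=
  Quiver Empty_set Empty_set (fun e => e) (fun e => e).

Definition card_le1 (X : Type) : Prop := forall x y : X, x = y.

(* Main.v *)
Require Import Defs.

Definition Term : quiver := Quiver unit unit (fun _ => tt) (fun _ => tt).

Definition toTerm (C : quiver) : qhom C Term.
Proof. refine (QHom C Term (fun _ => tt) (fun _ => tt) _ _); intros; reflexivity. Defined.

Definition Vpt : quiver := Quiver unit Empty_set (fun e => match e with end) (fun e => match e with end).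

Definition ptmap (C : quiver) (x : qV C) : qhom Vpt C.
Proof. refine (QHom Vpt C (fun _ => x) (fun e => match e with end) _ _); intros []. Defined.

Definition Arr : quiver := Quiver bool unit (fun _ => false) (fun _ => true).

Definition arrmap (C : quiver) (e : qE C) : qhom Arr C.
Proof.
  refine (QHom Arr C (fun b => if b then qtgt C e else qsrc C e) (fun _ => e) _ _);
  intros; reflexivity.
Defined.

Theorem mainTheorem3 (C : quiver) (phi : qhom I_empty C) :
  mono_essential phi <-> (card_le1 (qV C) /\ card_le1 (qE C)).
Proof.
  split.
  - intros [_ H].
    assert (Hm : monic (toTerm C)).
    { apply H. intros Z g h _. split; [intro v; destruct (hV g v) | intro v; destruct (hE g v)]. }
    split.
    + intros x y.
      destruct (Hm Vpt (ptmap C x) (ptmap C y)) as [HV _].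
      * split; intros []; reflexivity.
      * exact (HV tt).
    + intros x y.
      destruct (Hm Arr (arrmap C x) (arrmap C y)) as [_ HE].
      * split; intros []; reflexivity.
      * exact (HE tt).
  - intros [HV HE]. split.
    + intros Z g h _. split; [intro v; destruct (hV g v) | intro v; destruct (hE g v)].
    + intros C' alpha _ Z g h _. split; intros; [apply HV | apply HE].
Qed.
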